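(* Let $0=t_0<t_1<\dots<t_N=T$ be a time grid with $\tau_k=t_k-t_{k-1}$ and $r_k=\tau_k/\tau_{k-1}$ ($k\ge2$). Let $0<\iota<1$ and let $v\in C^2(0,T]$ (and $v\in C[0,T]$) satisfy $|v_{tt}(t)|\le C(1+t^{\iota-2})$ for $t\in(0,T]$. Define, for $2\le n\le N$, $\mathcal R^n[v]:=v(t_n)-(1+r_n)v(t_{n-1})+r_nv(t_{n-2})$. Then there is a constant $C_v$ depending only on $v$ such that $$|\mathcal R^2[v]|\le C_v\big((\tau_1+\tau_2)^\iota/\iota+t_1^{\iota-2}\tau_2^2\big),\qquad |\mathcal R^n[v]|\le C_v\big(t_{n-2}^{\iota-2}(\tau_{n-1}+\tau_n)^2+t_{n-1}^{\iota-2}\tau_n^2\big),\ 3\le n\le N.$$ Moreover, if the grid is graded, $t_k=T(k/N)^\gamma$ with $\gamma\ge1$, then $|\mathcal R^n[v]|\le C_{v,\gamma}N^{-\min\{2,\gamma\iota\}}$ for $2\le n\le N$, where $C_{v,\gamma}$ depends only on $v$ and $\gamma$. *)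

(* Defs.v *)
From Stdlib Require Import Reals Lra.
From Coquelicot Require Import Coquelicot.
Open Scope R_scope.

(* real power x^y for x >= 0 (x^y := 0 at x = 0, used only with y > 0) *)
Definition rpow (x y : R) : R := if Rle_dec x 0 then 0 else Rpower x y.

Definition is_grid (T : R) (N : nat) (t : nat -> R) : Prop :=
  t 0%nat = 0 /\ t N = T /\ (forall k : nat, (k < N)%nat -> t k < t (S k)).

Definition tau (t : nat -> R) (k : nat) : R := t k - t (pred k).

Definition ratio (t : nat -> R) (k : nat) : R := tau t k / tau t (pred k).

Definition Rres (t : nat -> R) (v : R -> R) (n : nat) : R :=
  v (t n) - (1 + ratio t n) * v (t (n - 1)%nat) + ratio t n * v (t (n - 2)%nat).

Definition graded_grid (T : R) (N : nat) (gamma : R) (k : nat) : R :=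
  T * rpow (INR k / INR N) gamma.

(* Main.v *)
Require Import Defs.
From Stdlib Require Import Reals Lra Lia.
From Coquelicot Require Import Coquelicot.
Open Scope R_scope.

Lemma exple x y : x <= y -> exp x <= exp y.
Proof. intros [H|H]; [left; now apply exp_increasing| subst; lra]. Qed.

Lemma rpow_pos x y : 0 < x -> rpow x y = exp (y * ln x).
Proof. intros Hx; unfold rpow; destruct (Rle_dec x 0); [lra| reflexivity]. Qed.

Lemma rpow_ge0 x y : 0 <= rpow x y.
Proof. unfold rpow; destruct (Rle_dec x 0); [lra| unfold Rpower; left; apply exp_pos]. Qed.

Lemma mvt_open f df a b : a < b ->
  (forall x, a < x < b -> is_derive f x (df x)) ->
  (forall x, a <= x <= b -> continuity_pt f x) ->
  exists c, a < c < b /\ f b - f a = df c * (b - a).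
Proof.
  intros Hab Hd Hc.
  assert (pr1 : forall c, a < c < b -> derivable_pt f c).
  { intros c Pc. exists (df c). apply is_derive_Reals. now apply Hd. }
  destruct (MVT f id a b pr1 (fun c _ => derivable_pt_id c) Hab Hc
     (fun c _ => derivable_continuous_pt _ _ (derivable_pt_id c))) as [c [P Hc']].
  exists c; split; [exact P|].
  rewrite derive_pt_id in Hc'.
  assert (E : derive_pt f c (pr1 c P) = df c).
  { apply derive_pt_eq_0. apply is_derive_Reals. now apply Hd. }
  rewrite E in Hc'. unfold id in Hc'. lra.
Qed.

Lemma deriv_cont f df x : is_derive f x df -> continuity_pt f x.
Proof.
  intros H. apply derivable_continuous_pt. exists df. now apply is_derive_Reals.
Qed.

Lemma incr f df a b : a <= b ->
  (forall x, a <= x <= b -> is_derive f x (df x)) ->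
  (forall x, a < x < b -> 0 <= df x) -> f a <= f b.
Proof.
  intros [Hab|Hab] Hd Hp; [|subst; lra].
  destruct (mvt_open f df a b Hab) as [c [Pc E]].
  - intros; apply Hd; lra.
  - intros x Hx; apply (deriv_cont _ _ _ (Hd x Hx)).
  - assert (0 <= df c) by (apply Hp; lra). nra.
Qed.

Lemma is_derive_rpow y x : 0 < x -> is_derive (fun s => Rpower s y) x (y * Rpower x (y - 1)).
Proof. intros; apply is_derive_Reals; now apply derivable_pt_lim_power. Qed.

Lemma is_derive_eq (f : R -> R) (x l l' : R) : is_derive f x l -> l = l' -> is_derive f x l'.
Proof. intros H ->; exact H. Qed.

Lemma rpow_Rpower x y : 0 < x -> rpow x y = Rpower x y.
Proof. intros Hx; unfold rpow; destruct (Rle_dec x 0); [lra| reflexivity]. Qed.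

Lemma d_plus (f g : R -> R) x a b : is_derive f x a -> is_derive g x b ->
  is_derive (fun y => f y + g y) x (a + b).
Proof. intros; now apply (is_derive_plus f g). Qed.
Lemma d_minus (f g : R -> R) x a b : is_derive f x a -> is_derive g x b ->
  is_derive (fun y => f y - g y) x (a - b).
Proof. intros; now apply (is_derive_minus f g). Qed.
Lemma d_mult (f g : R -> R) x a b : is_derive f x a -> is_derive g x b ->
  is_derive (fun y => f y * g y) x (a * g x + f x * b).
Proof. intros; apply (is_derive_mult f g); auto. intros; apply Rmult_comm. Qed.
Lemma d_const (c x : R) : is_derive (fun _ => c) x 0.
Proof. apply (is_derive_const c x). Qed.
Lemma d_id (x : R) : is_derive (fun y => y) x 1.
Proof. apply (is_derive_id x). Qed.
Lemma d_scal (f : R -> R) k x a : is_derive f x a -> is_derive (fun y => k * f y) x (k * a).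
Proof. apply is_derive_scal. Qed.
Lemma d_pow2 (f : R -> R) x a : is_derive f x a -> is_derive (fun y => (f y)^2) x (2 * f x * a).
Proof. intros H. eapply is_derive_eq. apply (d_mult f (fun y => f y * 1)); [exact H|].
  apply (d_mult f (fun _ => 1)); [exact H| apply d_const]. simpl; ring. Qed.

Definition Hyp (T iota C : R) (v v1 v2 : R -> R) : Prop :=
  0 < T /\ 0 < iota /\ iota < 1 /\
  (forall x, 0 <= x <= T -> continuity_pt v x) /\
  (forall x, 0 < x < T -> is_derive v x (v1 x)) /\
  (forall x, 0 < x < T -> is_derive v1 x (v2 x)) /\
  (forall x, 0 < x < T -> Rabs (v2 x) <= C * (1 + rpow x (iota - 2))).

Lemma taylor_right T iota C v v1 v2 a b M : Hyp T iota C v v1 v2 ->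
  0 < a < b -> b <= T -> (forall x, a < x < b -> Rabs (v2 x) <= M) ->
  Rabs (v b - v a - (b - a) * v1 a) <= M * (b - a) ^ 2.
Proof.
  intros (HT & Hi & Hi1 & Hc & Hd1 & Hd2 & Hb) Hab HbT HM.
  destruct (mvt_open v v1 a b) as [c [Pc Ec]]; [lra| intros; apply Hd1; lra | intros; apply Hc; lra |].
  destruct (mvt_open v1 v2 a c) as [e [Pe Ee]]; [lra| intros; apply Hd2; lra |
    intros; apply (deriv_cont _ _ _ (Hd2 x ltac:(lra))) |].
  replace (v b - v a - (b - a) * v1 a) with ((b - a) * (v2 e * (c - a))) by (rewrite Ec; nra).
  assert (Hm := HM e ltac:(lra)).
  rewrite Rabs_mult, Rabs_mult, (Rabs_right (b-a)), (Rabs_right (c-a)) by lra.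
  assert (0 <= Rabs (v2 e)) by apply Rabs_pos.
  assert (Rabs (v2 e) * (c - a) <= M * (b - a)) by (apply Rmult_le_compat; lra).
  nra.
Qed.

Lemma taylor_left T iota C v v1 v2 a b M : Hyp T iota C v v1 v2 ->
  0 < a < b -> b < T -> (forall x, a < x < b -> Rabs (v2 x) <= M) ->
  Rabs (v a - v b - (a - b) * v1 b) <= M * (b - a) ^ 2.
Proof.
  intros (HT & Hi & Hi1 & Hc & Hd1 & Hd2 & Hb) Hab HbT HM.
  destruct (mvt_open v v1 a b) as [c [Pc Ec]]; [lra| intros; apply Hd1; lra | intros; apply Hc; lra |].
  destruct (mvt_open v1 v2 c b) as [e [Pe Ee]]; [lra| intros; apply Hd2; lra |
    intros; apply (deriv_cont _ _ _ (Hd2 x ltac:(lra))) |].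
  replace (v a - v b - (a - b) * v1 b) with ((b - a) * (v2 e * (b - c))) by nra.
  assert (Hm := HM e ltac:(lra)).
  rewrite Rabs_mult, Rabs_mult, (Rabs_right (b-a)), (Rabs_right (b-c)) by lra.
  assert (0 <= Rabs (v2 e)) by apply Rabs_pos.
  assert (Rabs (v2 e) * (b - c) <= M * (b - a)) by (apply Rmult_le_compat; lra).
  nra.
Qed.

Lemma Rpower_pos x y : 0 < Rpower x y.
Proof. unfold Rpower; apply exp_pos. Qed.

Lemma sing_step1 T iota C v v1 v2 a s : Hyp T iota C v v1 v2 -> 0 <= C ->
  0 < s <= a -> a < T ->
  Rabs (v1 a - v1 s) <= (C * a - C / (1 - iota) * Rpower a (iota - 1))
                      - (C * s - C / (1 - iota) * Rpower s (iota - 1)).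
Proof.
  intros H HC Hs HaT. destruct H as (HT & Hi & Hi1 & Hc & Hd1 & Hd2 & Hb).
  set (P := fun y => C * y - C / (1 - iota) * Rpower y (iota - 1)).
  assert (HP : forall y, 0 < y -> is_derive P y (C + C * Rpower y (iota - 2))).
  { intros y Hy. unfold P. eapply is_derive_eq.
    apply d_minus; [apply d_scal, d_id| apply d_scal, is_derive_rpow; exact Hy].
    replace (iota - 1 - 1) with (iota - 2) by ring. field. lra. }
  assert (Bd : forall x, s < x < a -> Rabs (v2 x) <= C + C * Rpower x (iota - 2)).
  { intros x Hx. specialize (Hb x ltac:(lra)). rewrite rpow_Rpower in Hb by lra. lra. }
  assert (I1 : P s - v1 s <= P a - v1 a).
  { apply (incr (fun y => P y - v1 y) (fun y => (C + C * Rpower y (iota - 2)) - v2 y)); [lra| |].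
    - intros x Hx. apply d_minus; [apply HP; lra| apply Hd2; lra].
    - intros x Hx. specialize (Bd x Hx). apply Rabs_le_between in Bd. lra. }
  assert (I2 : P s + v1 s <= P a + v1 a).
  { apply (incr (fun y => P y + v1 y) (fun y => (C + C * Rpower y (iota - 2)) + v2 y)); [lra| |].
    - intros x Hx. apply d_plus; [apply HP; lra| apply Hd2; lra].
    - intros x Hx. specialize (Bd x Hx). apply Rabs_le_between in Bd. lra. }
  fold (P a) (P s). apply Rabs_le. lra.
Qed.

Lemma sing_step2 T iota C v v1 v2 a x : Hyp T iota C v v1 v2 -> 0 <= C ->
  0 < x < a -> a < T ->
  Rabs (v a - v x - (a - x) * v1 a) <= C / (iota * (1 - iota)) * Rpower a iota + C / 2 * a ^ 2.
Proof.
  intros H HC Hx HaT. pose proof H as H'. destruct H as (HT & Hi & Hi1 & Hc & Hd1 & Hd2 & Hb).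
  set (Q := fun y => - (C / 2) * (a - y) ^ 2 + C / (iota * (1 - iota)) * Rpower y iota).
  set (E := fun y => v a - v y - (a - y) * v1 a).
  assert (HQ : forall y, 0 < y -> is_derive Q y (C * (a - y) + C / (1 - iota) * Rpower y (iota - 1))).
  { intros y Hy. unfold Q. eapply is_derive_eq.
    apply d_plus; [apply d_scal, d_pow2, d_minus; [apply d_const| apply d_id]
                 | apply d_scal, is_derive_rpow; exact Hy].
    field. lra. }
  assert (HE : forall y, 0 < y < T -> is_derive E y (v1 a - v1 y)).
  { intros y Hy. unfold E. eapply is_derive_eq.
    apply d_minus; [apply d_minus; [apply d_const| apply Hd1; exact Hy]|].
    apply (d_mult (fun y => a - y) (fun _ => v1 a)); [apply d_minus; [apply d_const| apply d_id]| apply d_const].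
    ring. }
  assert (Bd : forall y, x < y < a -> Rabs (v1 a - v1 y) <= C * (a - y) + C / (1 - iota) * Rpower y (iota - 1)).
  { intros y Hy. pose proof (sing_step1 T iota C v v1 v2 a y H' HC ltac:(lra) HaT) as S.
    assert (0 <= C / (1 - iota) * Rpower a (iota - 1)).
    { apply Rmult_le_pos; [apply Rdiv_le_0_compat; lra| left; apply Rpower_pos]. }
    lra. }
  assert (I1 : Q x - E x <= Q a - E a).
  { apply (incr (fun y => Q y - E y) (fun y => (C * (a - y) + C / (1 - iota) * Rpower y (iota - 1)) - (v1 a - v1 y))); [lra| |].
    - intros y Hy. apply d_minus; [apply HQ; lra| apply HE; lra].
    - intros y Hy. specialize (Bd y Hy). apply Rabs_le_between in Bd. lra. }
  assert (I2 : Q x + E x <= Q a + E a).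
  { apply (incr (fun y => Q y + E y) (fun y => (C * (a - y) + C / (1 - iota) * Rpower y (iota - 1)) + (v1 a - v1 y))); [lra| |].
    - intros y Hy. apply d_plus; [apply HQ; lra| apply HE; lra].
    - intros y Hy. specialize (Bd y Hy). apply Rabs_le_between in Bd. lra. }
  assert (Ea : E a = 0) by (unfold E; ring).
  assert (Qa : Q a - Q x <= C / (iota * (1 - iota)) * Rpower a iota + C / 2 * a ^ 2).
  { unfold Q. assert (0 <= C / (iota * (1 - iota)) * Rpower x iota).
    { apply Rmult_le_pos; [apply Rdiv_le_0_compat; [lra| nra]| left; apply Rpower_pos]. }
    assert (C / 2 * (a - x) ^ 2 <= C / 2 * a ^ 2).
    { apply Rmult_le_compat_l; [lra| nra]. }
    replace ((a - a) ^ 2) with 0 by ring. lra. }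
  fold (E x). apply Rabs_le. lra.
Qed.

Lemma sing T iota C v v1 v2 a : Hyp T iota C v v1 v2 -> 0 <= C ->
  0 < a < T ->
  Rabs (v a - v 0 - a * v1 a) <= C / (iota * (1 - iota)) * Rpower a iota + C / 2 * a ^ 2.
Proof.
  intros H HC Ha. pose proof H as H'. destruct H as (HT & Hi & Hi1 & Hc & Hd1 & Hd2 & Hb).
  set (B := C / (iota * (1 - iota)) * Rpower a iota + C / 2 * a ^ 2).
  destruct (Rle_dec (Rabs (v a - v 0 - a * v1 a)) B) as [ok|nok]; [exact ok| exfalso].
  set (eps := (Rabs (v a - v 0 - a * v1 a) - B) / 2).
  assert (Heps : eps > 0) by (unfold eps; lra).
  pose proof (Hc 0 ltac:(lra)) as C0.
  unfold continuity_pt, continue_in, limit1_in, limit_in, D_x, no_cond in C0; simpl in C0; unfold R_dist in C0.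
  destruct (C0 eps Heps) as [d [Hd Hdd]].
  set (x := Rmin (d / 2) (Rmin (a / 2) (eps / (Rabs (v1 a) + 1)))).
  assert (Hx1 : x <= d / 2) by apply Rmin_l.
  assert (Hx2 : x <= a / 2) by (eapply Rle_trans; [apply Rmin_r| apply Rmin_l]).
  assert (Hx3 : x <= eps / (Rabs (v1 a) + 1)) by (eapply Rle_trans; [apply Rmin_r| apply Rmin_r]).
  assert (Hpos1 : 0 < Rabs (v1 a) + 1) by (pose proof (Rabs_pos (v1 a)); lra).
  assert (Hx0 : 0 < x).
  { unfold x. repeat apply Rmin_pos; try lra. apply Rdiv_lt_0_compat; lra. }
  assert (Hv : Rabs (v x - v 0) < eps).
  { apply Hdd. split; [split; [trivial| lra]|]. rewrite Rminus_0_r, Rabs_right; lra. }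
  assert (Hxv : x * Rabs (v1 a) <= eps).
  { apply Rmult_le_compat_r with (r := Rabs (v1 a) + 1) in Hx3; [|lra].
    unfold Rdiv in Hx3. rewrite Rmult_assoc, Rinv_l in Hx3 by lra. nra. }
  pose proof (sing_step2 T iota C v v1 v2 a x H' HC ltac:(lra) ltac:(lra)) as S2. fold B in S2.
  assert (Rabs (v a - v 0 - a * v1 a) <= Rabs (v a - v x - (a - x) * v1 a) + Rabs (v x - v 0) + Rabs (x * v1 a)).
  { replace (v a - v 0 - a * v1 a) with ((v a - v x - (a - x) * v1 a) + (v x - v 0) + - (x * v1 a)) by ring.
    eapply Rle_trans; [apply Rabs_triang|]. rewrite Rabs_Ropp.
    pose proof (Rabs_triang (v a - v x - (a - x) * v1 a) (v x - v 0)). lra. }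
  rewrite Rabs_mult, (Rabs_right x) in H by lra.
  unfold eps in *. lra.
Qed.

Lemma grid_lt T N t : is_grid T N t -> forall i j, (i < j)%nat -> (j <= N)%nat -> t i < t j.
Proof.
  intros (H0 & HN & Hs) i j Hij HjN. induction j as [|j IH]; [lia|].
  destruct (Nat.eq_dec i j) as [->|ne]; [apply Hs; lia|].
  apply Rlt_trans with (t j); [apply IH; lia| apply Hs; lia].
Qed.

Lemma Rpower_le_base a b y : 0 < a <= b -> 0 <= y -> Rpower a y <= Rpower b y.
Proof. intros Ha Hy; unfold Rpower; apply exple.
  assert (ln a <= ln b) by (apply ln_le; lra). nra. Qed.

Lemma Rpower_le_base_neg a b y : 0 < a <= b -> y <= 0 -> Rpower b y <= Rpower a y.
Proof. intros Ha Hy; unfold Rpower; apply exple.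
  assert (ln a <= ln b) by (apply ln_le; lra). nra. Qed.

Lemma S_ge1 T a iota : 0 < a <= T -> iota <= 2 -> 1 <= Rpower T (2 - iota) * Rpower a (iota - 2).
Proof. intros Ha Hi. unfold Rpower. rewrite <- exp_plus, <- exp_0. apply exple.
  assert (ln a <= ln T) by (apply ln_le; lra). nra. Qed.

Lemma Rpower_2 a : 0 < a -> Rpower a 2 = a ^ 2.
Proof. intros Ha. replace 2 with (INR 2) by (simpl; ring). apply Rpower_pow; exact Ha. Qed.

Lemma core_n3 T iota C v v1 v2 N t n : Hyp T iota C v v1 v2 -> 0 <= C -> is_grid T N t ->
  (3 <= n <= N)%nat ->
  Rabs (Rres t v n) <= 2 * C * (1 + Rpower T (2 - iota)) * (rpow (t (n - 2)%nat) (iota - 2) * (t n - t (n - 2)%nat) ^ 2).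
Proof.
  intros H HC G Hn. pose proof H as H'. destruct H as (HT & Hi & Hi1 & Hc & Hd1 & Hd2 & Hb).
  pose proof (grid_lt T N t G) as Glt. destruct G as (G0 & GN & Gs).
  destruct n as [|[|[|m]]]; try lia.
  unfold Rres, ratio, tau. simpl pred. replace (S (S (S m)) - 1)%nat with (S (S m)) by lia.
  replace (S (S (S m)) - 2)%nat with (S m) by lia.
  set (a := t (S m)) in *. set (b := t (S (S m))) in *. set (c := t (S (S (S m)))) in *.
  assert (Ha : 0 < a) by (rewrite <- G0; apply Glt; lia).
  assert (Hab : a < b) by (apply Glt; lia).
  assert (Hbc : b < c) by (apply Glt; lia).
  assert (HcT : c <= T).
  { rewrite <- GN. destruct (Nat.eq_dec (S (S (S m))) N) as [<-|ne]; [right; reflexivity| left; apply Glt; lia]. }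
  set (V := Rpower a (iota - 2)).
  set (M := C * (1 + V)).
  assert (HM : forall x, a < x < c -> Rabs (v2 x) <= M).
  { intros x Hx. eapply Rle_trans; [apply Hb; lra|]. rewrite rpow_Rpower by lra.
    unfold M, V. apply Rmult_le_compat_l; [lra|]. apply Rplus_le_compat_l.
    apply Rpower_le_base_neg. all: try lra. }
  pose proof (taylor_right T iota C v v1 v2 b c M H' ltac:(lra) HcT ltac:(intros; apply HM; lra)) as X1.
  pose proof (taylor_left T iota C v v1 v2 a b M H' ltac:(lra) ltac:(lra) ltac:(intros; apply HM; lra)) as X2.
  set (r := (c - b) / (b - a)).
  assert (Hr : r * (b - a) = c - b) by (unfold r; field; lra).
  assert (Hr0 : 0 < r) by (unfold r; apply Rdiv_lt_0_compat; lra).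
  replace (v c - (1 + r) * v b + r * v a) with
    ((v c - v b - (c - b) * v1 b) + r * (v a - v b - (a - b) * v1 b)) by
    (replace (c - b) with (r * (b - a)) by exact Hr; ring).
  eapply Rle_trans; [apply Rabs_triang|]. rewrite Rabs_mult, (Rabs_right r) by lra.
  assert (X2' : r * Rabs (v a - v b - (a - b) * v1 b) <= r * (M * (b - a) ^ 2)) by (apply Rmult_le_compat_l; lra).
  assert (HM0 : 0 <= M) by (eapply Rle_trans; [apply Rabs_pos| apply (HM ((a+c)/2)); lra]).
  assert (E1 : r * (M * (b - a) ^ 2) = M * ((c - b) * (b - a))) by (rewrite <- Hr; ring).
  assert (E2 : M * (c - b) ^ 2 + M * ((c - b) * (b - a)) <= M * (c - a) ^ 2).
  { assert ((c - b) ^ 2 + (c - b) * (b - a) <= (c - a) ^ 2) by nra. nra. }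
  assert (HS := S_ge1 T a iota ltac:(lra) ltac:(lra)).
  assert (HV : 0 < V) by apply Rpower_pos.
  assert (M <= 2 * C * (1 + Rpower T (2 - iota)) * V).
  { unfold M. assert (Rpower T (2 - iota) * V >= 1) by (unfold V; lra).
    assert (0 < Rpower T (2 - iota)) by apply Rpower_pos. nra. }
  rewrite rpow_Rpower by lra. fold V.
  assert (0 <= (c - a) ^ 2) by nra.
  assert (M * (c - a) ^ 2 <= 2 * C * (1 + Rpower T (2 - iota)) * V * (c - a) ^ 2) by (apply Rmult_le_compat_r; lra).
  lra.
Qed.

Lemma core_n2 T iota C v v1 v2 N t : Hyp T iota C v v1 v2 -> 0 <= C -> is_grid T N t ->
  (2 <= N)%nat ->
  Rabs (Rres t v 2) <= (2 * C * (1 + Rpower T (2 - iota)) + 2 * (C / (iota * (1 - iota)))) *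
     (rpow (t 2%nat) iota + rpow (t 1%nat) (iota - 2) * (t 2%nat - t 1%nat) ^ 2).
Proof.
  intros H HC G HN. pose proof H as H'. destruct H as (HT & Hi & Hi1 & Hc & Hd1 & Hd2 & Hb).
  pose proof (grid_lt T N t G) as Glt. destruct G as (G0 & GN & Gs).
  unfold Rres, ratio, tau. simpl pred. simpl (2 - 1)%nat. simpl (2 - 2)%nat. rewrite G0.
  set (a := t 1%nat) in *. set (b := t 2%nat) in *.
  assert (Ha : 0 < a) by (rewrite <- G0; apply Glt; lia).
  assert (Hab : a < b) by (apply Glt; lia).
  assert (HbT : b <= T).
  { rewrite <- GN. destruct (Nat.eq_dec 2 N) as [<-|ne]; [right; reflexivity| left; apply Glt; lia]. }
  set (V := Rpower a (iota - 2)). set (U := Rpower a iota). set (W := Rpower b iota).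
  set (S := Rpower T (2 - iota)). set (k := C / (iota * (1 - iota))).
  set (M := C * (1 + V)).
  assert (HM : forall x, a < x < b -> Rabs (v2 x) <= M).
  { intros x Hx. eapply Rle_trans; [apply Hb; lra|]. rewrite rpow_Rpower by lra.
    unfold M, V. apply Rmult_le_compat_l; [lra|]. apply Rplus_le_compat_l.
    apply Rpower_le_base_neg. all: lra. }
  pose proof (taylor_right T iota C v v1 v2 a b M H' ltac:(lra) HbT HM) as X1.
  pose proof (sing T iota C v v1 v2 a H' HC ltac:(lra)) as X2. fold U k in X2.
  set (d := b - a) in *.
  assert (Hd : 0 < d) by (unfold d; lra).
  set (r := d / (a - 0)).
  assert (Hr : r * a = d) by (unfold r; field; lra).
  assert (Hr0 : 0 < r) by (unfold r; apply Rdiv_lt_0_compat; lra).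
  replace (v b - (1 + r) * v a + r * v 0) with
    ((v b - v a - d * v1 a) - r * (v a - v 0 - a * v1 a)) by
    (replace d with (r * a) by exact Hr; ring).
  eapply Rle_trans; [apply Rabs_triang|]. rewrite Rabs_Ropp, Rabs_mult, (Rabs_right r) by lra.
  assert (X2' : r * Rabs (v a - v 0 - a * v1 a) <= r * (k * U + C / 2 * a ^ 2)) by (apply Rmult_le_compat_l; lra).
  rewrite !rpow_Rpower by lra. fold U V W.
  assert (HV : 0 < V) by apply Rpower_pos.
  assert (HU : 0 < U) by apply Rpower_pos.
  assert (HS0 : 0 < S) by apply Rpower_pos.
  assert (Hk : 0 <= k) by (unfold k; apply Rdiv_le_0_compat; nra).
  assert (HSV : 1 <= S * V) by (apply S_ge1; lra).
  assert (HUW : U <= W) by (apply Rpower_le_base; lra).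
  assert (HVU : V * a ^ 2 = U).
  { unfold V, U. rewrite <- Rpower_2 by lra. rewrite <- Rpower_plus. f_equal; ring. }
  assert (HaS : a ^ 2 <= S * U).
  { rewrite <- Rpower_2 by lra. unfold S, U. replace 2 with ((2 - iota) + iota) at 1 by ring.
    rewrite Rpower_plus. apply Rmult_le_compat_r; [left; apply Rpower_pos|]. apply Rpower_le_base; lra. }
  assert (Hra : r * a ^ 2 = d * a) by (rewrite <- Hr; ring).
  assert (HrU : r * U = d * a * V) by (rewrite <- HVU, <- Hr; field; lra).
  assert (HX1 : M * d ^ 2 <= C * (S + 1) * V * d ^ 2).
  { unfold M. assert (C * d ^ 2 <= C * S * V * d ^ 2).
    { assert (0 <= C * d^2) by nra. nra. }
    nra. }
  assert (HX2 : r * (k * U + C / 2 * a ^ 2) <= (k + C / 2 * S) * W + (k + C / 2 * S) * V * d ^ 2).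
  { replace (r * (k * U + C / 2 * a ^ 2)) with (k * (r * U) + C / 2 * (r * a ^ 2)) by ring.
    rewrite Hra, HrU.
    destruct (Rle_dec d a) as [Hda|Hda].
    - assert (d * a * V <= U) by (rewrite <- HVU; nra).
      assert (d * a <= S * W) by nra.
      assert (k * (d * a * V) <= k * W) by (apply Rmult_le_compat_l; lra).
      assert (C / 2 * (d * a) <= C / 2 * (S * W)) by (apply Rmult_le_compat_l; lra).
      assert (0 <= (k + C/2*S) * V * d^2).
      { apply Rmult_le_pos; [|nra]. apply Rmult_le_pos; nra. }
      nra.
    - assert (Hda2 : d * a <= d ^ 2) by (apply Rnot_le_lt in Hda; nra).
      assert (d * a * V <= V * d ^ 2) by (rewrite (Rmult_comm V); apply Rmult_le_compat_r; lra).
      assert (d ^ 2 <= S * V * d ^ 2) by (assert (0 <= d^2) by nra; nra).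
      assert (d * a <= S * V * d ^ 2) by lra.
      assert (k * (d * a * V) <= k * (V * d ^ 2)) by (apply Rmult_le_compat_l; lra).
      assert (C / 2 * (d * a) <= C / 2 * (S * V * d ^ 2)) by (apply Rmult_le_compat_l; lra).
      assert (0 <= (k + C/2*S) * W) by (apply Rmult_le_pos; nra).
      nra. }
  assert (0 <= V * d ^ 2) by nra.
  assert (0 < W) by apply Rpower_pos.
  assert ((k + C / 2 * S) * W <= (2 * C * (1 + S) + 2 * k) * W) by (apply Rmult_le_compat_r; nra).
  assert (C * (S + 1) * V * d ^ 2 + (k + C / 2 * S) * V * d ^ 2 <= (2 * C * (1 + S) + 2 * k) * (V * d ^ 2)).
  { assert (C * (S + 1) + (k + C / 2 * S) <= 2 * C * (1 + S) + 2 * k) by nra. nra. }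
  nra.
Qed.

Lemma gk T N gamma k : 0 < T -> (1 <= k)%nat -> (1 <= N)%nat ->
  graded_grid T N gamma k = exp (ln T + gamma * (ln (INR k) - ln (INR N))).
Proof.
  intros HT Hk HN. assert (0 < INR k) by (apply lt_0_INR; lia).
  assert (0 < INR N) by (apply lt_0_INR; lia).
  unfold graded_grid. rewrite rpow_Rpower by (apply Rdiv_lt_0_compat; lra).
  unfold Rpower. rewrite ln_div by lra. rewrite exp_plus, exp_ln by lra. reflexivity.
Qed.

Lemma graded_is_grid T N gamma : 0 < T -> 0 < gamma -> (1 <= N)%nat -> is_grid T N (graded_grid T N gamma).
Proof.
  intros HT Hg HN. assert (0 < INR N) by (apply lt_0_INR; lia).
  split; [|split].
  - unfold graded_grid, rpow. simpl INR. replace (0 / INR N) with 0 by (field; lra).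
    destruct (Rle_dec 0 0); [ring| lra].
  - rewrite gk by (lra || lia). rewrite Rminus_diag, Rmult_0_r, Rplus_0_r. apply exp_ln; lra.
  - intros k Hk. destruct k as [|k].
    + unfold graded_grid at 1, rpow. simpl INR. replace (0 / INR N) with 0 by (field; lra).
      destruct (Rle_dec 0 0); [|lra]. rewrite Rmult_0_r, gk by (lra || lia). apply exp_pos.
    + rewrite !gk by (lra || lia). apply exp_increasing.
      assert (ln (INR (S k)) < ln (INR (S (S k)))).
      { apply ln_increasing; [apply lt_0_INR; lia| apply lt_INR; lia]. }
      nra.
Qed.

Lemma rpow_exp x y : 0 < x -> rpow x y = exp (y * ln x).
Proof. apply rpow_pos. Qed.

Lemma diff_pow n gamma : 1 <= gamma -> 1 <= n - 2 ->
  Rpower n gamma - Rpower (n - 2) gamma <= 2 * gamma * Rpower n (gamma - 1).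
Proof.
  intros Hg Hn.
  destruct (mvt_open (fun s => Rpower s gamma) (fun s => gamma * Rpower s (gamma - 1)) (n - 2) n) as [c [Pc Ec]].
  - lra.
  - intros x Hx. apply is_derive_rpow; lra.
  - intros x Hx. apply (deriv_cont _ _ _ (is_derive_rpow gamma x ltac:(lra))).
  - rewrite Ec. replace (n - (n - 2)) with 2 by ring.
    assert (Rpower c (gamma - 1) <= Rpower n (gamma - 1)) by (apply Rpower_le_base; lra).
    nra.
Qed.

Lemma min_bound gamma iota ln_n L : 0 <= ln_n <= L ->
  (gamma * iota - 2) * ln_n - gamma * iota * L <= - Rmin 2 (gamma * iota) * L.
Proof.
  intros Hl. unfold Rmin. destruct (Rle_dec 2 (gamma * iota)) as [h|h].
  - assert ((gamma * iota - 2) * ln_n <= (gamma * iota - 2) * L) by (apply Rmult_le_compat_l; lra).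
    destruct (Rle_dec (gamma*iota) 2) ; nra.
  - apply Rnot_le_lt in h. destruct (Rle_dec 2 (gamma * iota)); [lra|].
    assert ((gamma * iota - 2) * ln_n <= 0) by nra. nra.
Qed.

Lemma graded_n3 T N gamma iota n : 0 < T -> 1 <= gamma -> 0 < iota < 1 -> (3 <= n <= N)%nat ->
  rpow (graded_grid T N gamma (n - 2)%nat) (iota - 2) *
    (graded_grid T N gamma n - graded_grid T N gamma (n - 2)%nat) ^ 2 <=
  4 * gamma ^ 2 * exp (iota * ln T + (2 - iota) * gamma * ln 3) * rpow (INR N) (- Rmin 2 (gamma * iota)).
Proof.
  intros HT Hg Hi Hn.
  assert (HN : 0 < INR N) by (apply lt_0_INR; lia).
  assert (Hnr : 3 <= INR n) by (replace 3 with (INR 3) by (simpl; ring); apply le_INR; lia).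
  assert (HnN : INR n <= INR N) by (apply le_INR; lia).
  assert (Em : INR (n - 2) = INR n - 2) by (rewrite minus_INR by lia; simpl; ring).
  set (L := ln (INR N)). set (ln_n := ln (INR n)). set (ln_m := ln (INR (n - 2))).
  set (e := exp (ln T - gamma * L)).
  assert (Hte : forall k, (1 <= k)%nat -> graded_grid T N gamma k = e * Rpower (INR k) gamma).
  { intros k Hk. rewrite gk by (lra || lia). fold L. unfold e, Rpower. rewrite <- exp_plus. f_equal. ring. }
  rewrite (Hte n) by lia. rewrite (Hte (n - 2)%nat) by lia.
  rewrite rpow_exp by (apply Rmult_lt_0_compat; [apply exp_pos| apply Rpower_pos]).
  rewrite rpow_exp by lra. fold L.
  rewrite Em.
  assert (Hd := diff_pow (INR n) gamma Hg ltac:(lra)).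
  assert (Hd0 : Rpower (INR n - 2) gamma <= Rpower (INR n) gamma) by (apply Rpower_le_base; lra).
  assert (He : 0 < e) by apply exp_pos.
  assert (Hsq : (e * Rpower (INR n) gamma - e * Rpower (INR n - 2) gamma) ^ 2 <=
                (e * (2 * gamma * Rpower (INR n) (gamma - 1))) ^ 2).
  { apply pow_incr. split; [nra|]. replace (e * Rpower (INR n) gamma - e * Rpower (INR n - 2) gamma)
      with (e * (Rpower (INR n) gamma - Rpower (INR n - 2) gamma)) by ring.
    apply Rmult_le_compat_l; lra. }
  replace ((e * (2 * gamma * Rpower (INR n) (gamma - 1))) ^ 2) with
     (4 * gamma ^ 2 * exp (2 * (ln T - gamma * L) + 2 * ((gamma - 1) * ln_n))) in Hsq.
  2:{ unfold e, Rpower. rewrite !exp_plus. fold ln_n. simpl. rewrite <- !exp_plus.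
      replace (2 * (ln T - gamma * L)) with ((ln T - gamma * L) + (ln T - gamma * L)) by ring.
      replace (2 * ((gamma - 1) * ln_n)) with ((gamma - 1) * ln_n + (gamma - 1) * ln_n) by ring.
      rewrite !exp_plus. ring. }
  rewrite ln_mult by (apply exp_pos || apply Rpower_pos).
  replace (ln e) with (ln T - gamma * L) by (unfold e; rewrite ln_exp; ring).
  rewrite ln_Rpower.
  replace (ln (INR n - 2)) with ln_m by (unfold ln_m; rewrite Em; reflexivity).
  eapply Rle_trans. { apply Rmult_le_compat_l; [left; apply exp_pos| exact Hsq]. }
  match goal with |- exp ?A * (_ * exp ?B) <= _ * exp ?c * exp ?D =>
    replace (exp A * (4 * gamma ^ 2 * exp B)) with (4 * gamma ^ 2 * exp (A + B)) by (rewrite exp_plus; ring);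
    replace (4 * gamma ^ 2 * exp c * exp D) with (4 * gamma ^ 2 * exp (c + D)) by (rewrite exp_plus; ring)
  end.
  apply Rmult_le_compat_l; [nra|]. apply exple.
  assert (Hln_n0 : 0 <= ln_n) by (unfold ln_n; rewrite <- ln_1; apply ln_le; lra).
  assert (HlnL : ln_n <= L) by (apply ln_le; lra).
  assert (Hm3 : ln_n <= ln 3 + ln_m).
  { unfold ln_n, ln_m. rewrite <- ln_mult by (try lra; rewrite Em; lra). apply ln_le; [lra|]. rewrite Em. lra. }
  pose proof (min_bound gamma iota ln_n L ltac:(lra)).
  assert ((iota - 2) * gamma * ln_m <= (iota - 2) * gamma * (ln_n - ln 3)).
  { apply Rmult_le_compat_neg_l; [nra| lra]. }
  nra.
Qed.

Lemma graded_n2 T N gamma iota : 0 < T -> 1 <= gamma -> 0 < iota < 1 -> (2 <= N)%nat ->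
  rpow (graded_grid T N gamma 2%nat) iota +
    rpow (graded_grid T N gamma 1%nat) (iota - 2) *
    (graded_grid T N gamma 2%nat - graded_grid T N gamma 1%nat) ^ 2 <=
  (exp (iota * ln T + gamma * iota * ln 2) + exp (iota * ln T + 2 * gamma * ln 2)) *
    rpow (INR N) (- Rmin 2 (gamma * iota)).
Proof.
  intros HT Hg Hi HN.
  assert (HN0 : 2 <= INR N) by (replace 2 with (INR 2) by (simpl; ring); apply le_INR; lia).
  rewrite !gk by (lra || lia). simpl INR. rewrite ln_1.
  replace (1 + 1) with 2 by ring.
  set (L := ln (INR N)).
  assert (HL : 0 <= L) by (unfold L; rewrite <- ln_1; apply ln_le; lra).
  assert (Hl2 : 0 < ln 2) by (rewrite <- ln_1; apply ln_increasing; lra).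
  rewrite !rpow_exp by (apply exp_pos || lra). rewrite !ln_exp. fold L.
  set (t1 := exp (ln T + gamma * (0 - L))). set (t2 := exp (ln T + gamma * (ln 2 - L))).
  assert (H12 : t1 < t2) by (apply exp_increasing; nra).
  assert (Ht1 : 0 < t1) by apply exp_pos.
  assert (Hsq : (t2 - t1) ^ 2 <= t2 ^ 2) by nra.
  assert (Hm : Rmin 2 (gamma * iota) <= gamma * iota) by apply Rmin_r.
  rewrite Rmult_plus_distr_r, <- !exp_plus.
  apply Rplus_le_compat.
  - apply exple. nra.
  - eapply Rle_trans. { apply Rmult_le_compat_l; [left; apply exp_pos| exact Hsq]. }
    unfold t2. simpl. rewrite Rmult_1_r, <- !exp_plus. apply exple. nra.
Qed.

Theorem mainTheorem2 :
  forall (T iota C : R) (v v1 v2 : R -> R),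
    0 < T -> 0 < iota -> iota < 1 ->
    (* v in C[0,T] *)
    (forall x, 0 <= x <= T -> continuity_pt v x) ->
    (* v in C^2 on (0,T) with v' = v1, v'' = v2 *)
    (forall x, 0 < x < T -> is_derive v x (v1 x)) ->
    (forall x, 0 < x < T -> is_derive v1 x (v2 x)) ->
    (forall x, 0 < x < T -> continuity_pt v2 x) ->
    (forall x, 0 < x < T -> Rabs (v2 x) <= C * (1 + rpow x (iota - 2))) ->
    (exists Cv : R,
       forall (N : nat) (t : nat -> R), is_grid T N t ->
         ((2 <= N)%nat ->
            Rabs (Rres t v 2) <=
              Cv * (rpow (tau t 1 + tau t 2) iota / iota
                    + rpow (t 1%nat) (iota - 2) * (tau t 2) ^ 2)) /\
         (forall n : nat, (3 <= n <= N)%nat ->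
            Rabs (Rres t v n) <=
              Cv * (rpow (t (n - 2)%nat) (iota - 2) * (tau t (n - 1) + tau t n) ^ 2
                    + rpow (t (n - 1)%nat) (iota - 2) * (tau t n) ^ 2)))
    /\
    (forall gamma : R, 1 <= gamma ->
       exists Cvg : R,
         forall (N n : nat), (2 <= n <= N)%nat ->
           Rabs (Rres (graded_grid T N gamma) v n) <=
             Cvg * rpow (INR N) (- Rmin 2 (gamma * iota))).
Proof.
  intros T iota C v v1 v2 HT Hi Hi1 Hc Hd1 Hd2 Hc2 Hb.
  assert (H : Hyp T iota C v v1 v2) by exact (conj HT (conj Hi (conj Hi1 (conj Hc (conj Hd1 (conj Hd2 Hb)))))).
  assert (HC : 0 <= C).
  { pose proof (Hb (T/2) ltac:(lra)) as h. pose proof (Rabs_pos (v2 (T/2))).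
    pose proof (rpow_ge0 (T/2) (iota - 2)). nra. }
  set (S := Rpower T (2 - iota)). set (k := C / (iota * (1 - iota))).
  assert (HS : 0 < S) by apply Rpower_pos.
  assert (Hk : 0 <= k) by (unfold k; apply Rdiv_le_0_compat; nra).
  set (K3 := 2 * C * (1 + S)). set (K := K3 + 2 * k).
  assert (HK3 : 0 <= K3) by (unfold K3; nra).
  assert (HK : K3 <= K) by (unfold K; lra).
  split.
  - exists K. intros N t G. split.
    + intros HN. pose proof (core_n2 T iota C v v1 v2 N t H HC G HN) as X. fold S k K3 K in X.
      destruct G as (G0 & _ & _).
      unfold tau. simpl pred. rewrite G0. replace (t 1%nat - 0 + (t 2%nat - t 1%nat)) with (t 2%nat) by ring.
      eapply Rle_trans; [exact X|]. apply Rmult_le_compat_l; [lra|].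
      apply Rplus_le_compat_r. pose proof (rpow_ge0 (t 2%nat) iota).
      unfold Rdiv. rewrite <- (Rmult_1_r (rpow _ _)) at 1. apply Rmult_le_compat_l; [lra|].
      rewrite <- Rinv_1. apply Rinv_le_contravar; lra.
    + intros n Hn. pose proof (core_n3 T iota C v v1 v2 N t n H HC G Hn) as X. fold S K3 in X.
      unfold tau. replace (pred (n - 1)) with (n - 2)%nat by lia. replace (pred n) with (n - 1)%nat by lia.
      replace (t (n - 1)%nat - t (n - 2)%nat + (t n - t (n - 1)%nat)) with (t n - t (n - 2)%nat) by ring.
      eapply Rle_trans; [exact X|].
      pose proof (rpow_ge0 (t (n - 2)%nat) (iota - 2)). pose proof (rpow_ge0 (t (n - 1)%nat) (iota - 2)).
      pose proof (pow2_ge_0 (t n - t (n - 2)%nat)). pose proof (pow2_ge_0 (t n - t (n - 1)%nat)).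
      assert (0 <= rpow (t (n - 2)%nat) (iota - 2) * (t n - t (n - 2)%nat) ^ 2) by (apply Rmult_le_pos; lra).
      assert (0 <= rpow (t (n - 1)%nat) (iota - 2) * (t n - t (n - 1)%nat) ^ 2) by (apply Rmult_le_pos; lra).
      nra.
  - intros gamma Hg.
    set (A2 := exp (iota * ln T + gamma * iota * ln 2) + exp (iota * ln T + 2 * gamma * ln 2)).
    set (A3 := 4 * gamma ^ 2 * exp (iota * ln T + (2 - iota) * gamma * ln 3)).
    assert (HA2 : 0 <= A2) by (unfold A2; pose proof (exp_pos (iota * ln T + gamma * iota * ln 2));
       pose proof (exp_pos (iota * ln T + 2 * gamma * ln 2)); lra).
    assert (HA3 : 0 <= A3) by (unfold A3; pose proof (exp_pos (iota * ln T + (2 - iota) * gamma * ln 3)); nra).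
    exists (K * (A2 + A3)). intros N n Hn.
    assert (G : is_grid T N (graded_grid T N gamma)) by (apply graded_is_grid; lra || lia).
    pose proof (rpow_ge0 (INR N) (- Rmin 2 (gamma * iota))) as HR.
    destruct (Nat.eq_dec n 2) as [->|ne].
    + pose proof (core_n2 T iota C v v1 v2 N _ H HC G ltac:(lia)) as X. fold S k K3 K in X.
      pose proof (graded_n2 T N gamma iota HT Hg ltac:(lra) ltac:(lia)) as Y. fold A2 in Y.
      eapply Rle_trans; [exact X|]. eapply Rle_trans. { apply Rmult_le_compat_l; [lra| exact Y]. }
      assert (0 <= K * (A3 * rpow (INR N) (- Rmin 2 (gamma * iota)))).
      { apply Rmult_le_pos; [lra| nra]. }
      nra.
    + pose proof (core_n3 T iota C v v1 v2 N _ n H HC G ltac:(lia)) as X. fold S K3 in X.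
      pose proof (graded_n3 T N gamma iota n HT Hg ltac:(lra) ltac:(lia)) as Y. fold A3 in Y.
      eapply Rle_trans; [exact X|]. eapply Rle_trans. { apply Rmult_le_compat_l; [lra| exact Y]. }
      assert (K3 * (A3 * rpow (INR N) (- Rmin 2 (gamma * iota))) <= K * (A3 * rpow (INR N) (- Rmin 2 (gamma * iota)))).
      { apply Rmult_le_compat_r; nra. }
      assert (0 <= K * (A2 * rpow (INR N) (- Rmin 2 (gamma * iota)))).
      { apply Rmult_le_pos; [lra| nra]. }
      nra.
Qed.
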